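(* Let $k,m,n\in\mathbb{N}$ with $n=k>m=1$, and let $b,c\in\mathbb{R}$ with $b\neq\pm1$. Let $$q(z)=bz^k+\overline{z}^n+c\,\overline{z}^m+z=\big(bz^k+z\big)+\overline{\big(z^n+cz^m\big)},$$ with dilatation function $$\omega(z)=\frac{(z^n+cz^m)'}{(bz^k+z)'}=\frac{nz^{n-1}+cmz^{m-1}}{bkz^{k-1}+1}.$$ Let $z$ be a point at which $\omega(z)$ is defined and such that $z^k\overline{z}$ is a pure imaginary number. Then $|\omega(z)|=1$ if and only if $$|z|=\left(\frac{1}{k}\right)^{\frac{1}{k-1}}\left(\frac{c^2-1}{b^2-1}\right)^{\frac{1}{2k-2}}.$$
   Context: $\overline{z}$ denotes the complex conjugate of $z$. For a harmonic polynomial $f=h+\overline{g}$ with $h,g$ analytic, its dilatation is $\omega=g'/h'$, defined where $h'\neq 0$. *)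

(* Defs.v *)
From HB Require Import structures.
From mathcomp Require Import all_boot all_order all_algebra.
From mathcomp Require Import complex.
From mathcomp Require Import all_classical all_reals all_analysis.
Set Implicit Arguments. Unset Strict Implicit. Unset Printing Implicit Defensive.
Import Order.TTheory GRing.Theory Num.Theory.
Local Open Scope ring_scope.
Local Open Scope complex_scope.

Definition hpoly (R : realType) (b : R) (k : nat) : {poly R[i]} :=
  (b%:C)%:P * 'X^k + 'X.
Definition gpoly (R : realType) (c : R) (n m : nat) : {poly R[i]} :=
  'X^n + (c%:C)%:P * 'X^m.

(* dilatation omega = g'/h' (meaningful where h' <> 0) *)
Definition dilatation (R : realType) (b c : R) (k n m : nat) (z : R[i]) : R[i] :=
  ((gpoly c n m)^`()).[z] / ((hpoly b k)^`()).[z].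

(* Main.v *)
Require Import Defs.
From HB Require Import structures.
From mathcomp Require Import all_boot all_order all_algebra.
From mathcomp Require Import complex.
From mathcomp Require Import all_classical all_reals all_analysis.
From mathcomp Require Import ring lra.
Import Order.TTheory GRing.Theory Num.Theory.
Local Open Scope ring_scope.
Local Open Scope complex_scope.

Lemma natC (R : rcfType) (n : nat) : (n%:R : R[i]) = (n%:R : R)%:C.
Proof.
elim: n => [//|n IH]; rewrite !mulrS IH.
by apply/eqP; rewrite eq_complex /= addr0 !eqxx.
Qed.

Lemma exprC (R : rcfType) (a : R) (n : nat) : (a%:C)^+n = (a^+n)%:C.
Proof.
elim: n => [//|n IH]; rewrite !exprS IH.
by apply/eqP; rewrite eq_complex /= !mulr0 !mul0r subr0 addr0 !eqxx.
Qed.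

Lemma Cinj (R : rcfType) (a b : R) : (a%:C = b%:C) <-> a = b.
Proof. by split => [[]|->]. Qed.

Lemma real_part (R : realType) (k' : nat) (b c r q : R) :
  b != 1 -> b != -1 -> 0 <= r ->
  q ^+ 2 = r ^+ (2 * k'.+1) ->
  (c ^+ 2 + (k'.+2%:R * q) ^+ 2 = 1 + (b * k'.+2%:R * q) ^+ 2) <->
   (0 <= (c ^+ 2 - 1) / (b ^+ 2 - 1) /\
    r = ((k'.+2%:R^-1 : R) `^ ((k'.+1)%:R^-1)
            * ((c ^+ 2 - 1) / (b ^+ 2 - 1)) `^ (((2 * k'.+1)%N)%:R^-1))).
Proof.
move=> b1 bN1 r0 hq.
set K : R := k'.+2%:R.
set N := (2 * k'.+1)%N.
set Q := (c ^+ 2 - 1) / (b ^+ 2 - 1).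
have K0 : 0 < K by rewrite /K ltr0n.
have D0 : b ^+ 2 - 1 != 0.
  rewrite subr_eq0 -(expr1n _ 2) eqf_sqr negb_or b1 /=; exact: bN1.
have N0 : (0 < N)%N by [].
have NR : (N%:R : R) = 2 * (k'.+1)%:R by rewrite /N natrM.
have E1 : (c ^+ 2 + (K * q) ^+ 2 = 1 + (b * K * q) ^+ 2) <-> Q = K^+2 * r ^+ N.
  rewrite /Q /N -hq; split => H.
    have H' : c ^+ 2 - 1 = K^+2 * q^+2 * (b ^+ 2 - 1).
      apply/eqP; rewrite -subr_eq0; apply/eqP.
      have -> : c ^+ 2 - 1 - K^+2 * q^+2 * (b ^+ 2 - 1) = (c ^+ 2 + (K * q) ^+ 2) - (1 + (b * K * q) ^+ 2) by ring.
      by rewrite H subrr.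
    by rewrite H' mulfK.
  have := congr1 (fun t => t * (b ^+ 2 - 1)) H; rewrite divfK // => H2.
  apply/eqP; rewrite -subr_eq0; apply/eqP.
  have -> : c ^+ 2 + (K * q) ^+ 2 - (1 + (b * K * q) ^+ 2) = (c^+2 - 1) - K^+2 * q^+2 * (b^+2 - 1) by ring.
  by rewrite H2 subrr.
rewrite E1.
set A := (K^-1) `^ ((k'.+1)%:R^-1).
set B := Q `^ (N%:R^-1).
have AN : A ^+ N = K^-2.
  rewrite /A -powR_mulrn ?powR_ge0 // -powRrM NR mulrC mulfK ?pnatr_eq0 //.
  by rewrite powR_mulrn ?exprVn // invr_ge0 ltW.
have BN : 0 <= Q -> B ^+ N = Q.
  move=> Q0; rewrite /B -powR_mulrn ?powR_ge0 // -powRrM mulVf ?pnatr_eq0 //.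
  exact: powRr1.
have AB0 : 0 <= A * B by rewrite mulr_ge0 ?powR_ge0.
split.
  move=> HQ.
  have Q0 : 0 <= Q by rewrite HQ mulr_ge0 ?exprn_ge0 // ltW.
  split => //; apply/eqP; rewrite -(eqrXn2 N0 r0 AB0) exprMn AN BN // HQ.
  by rewrite mulrA mulVf ?mul1r // expf_neq0 // gt_eqF.
move=> [Q0 ->]; rewrite exprMn AN BN //.
by rewrite mulrA divff ?mul1r // expf_neq0 // gt_eqF.
Qed.

Theorem theorem3p8 (R : realType) (k m n : nat) (b c : R) (z : R[i]) :
  n = k -> (m < k)%N -> m = 1%N ->
  b != 1 -> b != -1 ->
  ((hpoly b k)^`()).[z] != 0 ->
  Re (z ^+ k * (z^*)%C) = 0 ->
  (`|dilatation b c k n m z| = 1 <->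
   (0 <= (c ^+ 2 - 1) / (b ^+ 2 - 1) /\
    `|z| = ((k%:R^-1 : R) `^ ((k.-1)%:R^-1)
            * ((c ^+ 2 - 1) / (b ^+ 2 - 1)) `^ (((2 * k - 2)%N)%:R^-1))%:C)).
Proof.
move=> -> Hmk Hm; subst m.
case: k Hmk => [|[|k']] // _ b1 bN1.
have Hh : ((hpoly b k'.+2)^`()).[z] = b%:C * k'.+2%:R * z^+(k'.+1) + 1.
  rewrite /hpoly derivD mul_polyC derivZ derivXn derivX hornerD hornerZ hornerMn hornerXn -polyC1 hornerC.
  by rewrite -mulr_natl mulrA.
have Hg : ((gpoly c k'.+2 1)^`()).[z] = k'.+2%:R * z^+(k'.+1) + c%:C.
  rewrite /gpoly derivD mul_polyC derivZ derivXn derivX hornerD hornerZ hornerMn hornerXn -polyC1 hornerC.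
  by rewrite -mulr_natl mulr1.
rewrite /dilatation Hh Hg => hz0 Hre.
rewrite (_ : (2 * k'.+2 - 2)%N = (2 * k'.+1)%N); last by rewrite mulnS addKn.
have Hw1 : `|z ^+ k'.+1| = `|z| ^+ k'.+1 := normrX _ _.
have Hre' : complex.Re ((z * z^*) * z^+k'.+1) = 0.
  have -> : z * z^* * z ^+ k'.+1 = z^+k'.+2 * z^* by rewrite (exprS z k'.+1); ring.
  by apply/Cinj; rewrite complexRe Hre.
rewrite -sqr_normc in Hre'.
have [r [r0 Hr]] : exists r, 0 <= r /\ `|z| = r%:C.
  by exists (Num.sqrt (complex.Re z ^+ 2 + complex.Im z ^+ 2)); rewrite normc_def sqrtr_ge0.
rewrite Hr Cinj in Hre' Hw1 *.
move: hz0 Hre' Hw1; move: (z^+k'.+1) => w.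
case: w => p q hz0 Hre' Hw1.
rewrite exprC normc_def Cinj in Hw1.
rewrite exprC /= in Hre'.
have S : p^+2 + q^+2 = r^+(2*k'.+1).
  by rewrite -(sqr_sqrtr (addr_ge0 (sqr_ge0 p) (sqr_ge0 q))) Hw1 -exprM mulnC.
have p0 : p = 0.
  case: (eqVneq r 0) => [r0'|rn0].
    rewrite r0' expr0n /= in S.
    move/eqP: S; rewrite paddr_eq0 ?sqr_ge0 // => /andP[/eqP + _].
    by move/eqP; rewrite sqrf_eq0 => /eqP.
  move: Hre'; rewrite mul0r subr0 => /eqP; rewrite mulf_eq0 expf_eq0 /= (negbTE rn0) /=.
  by move/eqP.
subst p.
have hq : q^+2 = r^+(2*k'.+1) by rewrite -S expr0n add0r.
have eN : k'.+2%:R * (0 +i* q) + c%:C = c +i* (k'.+2%:R * q).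
  by apply/eqP; rewrite eq_complex natC /=; apply/andP; split; apply/eqP; ring.
have eD : b%:C * k'.+2%:R * (0 +i* q) + 1 = 1 +i* (b * k'.+2%:R * q).
  by apply/eqP; rewrite eq_complex natC /=; apply/andP; split; apply/eqP; ring.
rewrite eN eD in hz0 *.
rewrite Normc.normcM Normc.normcV /=.
have Bpos : 0 < Num.sqrt (1 ^+ 2 + (b * k'.+2%:R * q) ^+ 2).
  by rewrite sqrtr_gt0 expr1n ltr_pwDl ?sqr_ge0.
have key : forall x y : R, 0 < y -> (x * y^-1 = 1) <-> x = y.
  move=> x y y0; split => H.
    by have := congr1 (fun t => t * y) H; rewrite divfK ?gt_eqF // mul1r.
  by rewrite H divff // gt_eqF.
apply: (iff_trans (key _ _ Bpos)).
have sq : forall A B : R, 0 <= A -> 0 <= B -> (Num.sqrt A = Num.sqrt B) <-> A = B.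
  move=> A B A0 B0; split; last by move=> ->.
  by move/eqP; rewrite eqr_sqrt // => /eqP.
apply: (iff_trans (sq _ _ _ _)); rewrite ?addr_ge0 ?sqr_ge0 //.
rewrite expr1n.
have RP := @real_part _ k' b c r q b1 bN1 r0 hq.
split.
  move=> H; have [h1 h2] := (proj1 RP) H; split => //; by rewrite h2.
move=> [h1 h2]; apply RP; split => //; exact/Cinj.
Qed.
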